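(* Let $W:\mathcal X\to\mathcal Y$ be a DMC with $|\mathcal Y|>2|\mathcal X|$, let $L\ge 2|\mathcal X|$ be an integer, and fix any input distribution. Then $$\Delta I^\ast_{\mathrm{deg}}=\min_{Q\preccurlyeq W,\ |Q|\le L}\big(I(W)-I(Q)\big)\le \nu(|\mathcal X|)\, L^{-\frac{2}{|\mathcal X|-1}},$$ so in particular $\Delta I^\ast_{\mathrm{deg}}=O\big(L^{-2/(|\mathcal X|-1)}\big)$. Moreover, the channel $Q$ produced by the greedy-merge algorithm satisfies $I(W)-I(Q)\le \nu(|\mathcal X|)\,L^{-\frac{2}{|\mathcal X|-1}}$.
   Context: $\mathcal X,\mathcal Y$ are finite disjoint sets with $|\mathcal X|\ge 2$; $W:\mathcal X\to\mathcal Y$ is a discrete memoryless channel (DMC) with transition probabilities $W(y|x)$. An input distribution $\pi(x)>0$ on $\mathcal X$ is fixed, and the output probabilities $\pi(y)=\sum_x\pi(x)W(y|x)$ are assumed positive. $I(W)$ is the mutual information between the input and output of $W$ under this input distribution (natural logarithm); for any other channel with input alphabet $\mathcal X$ the same input distribution is used. A channel $Q:\mathcal X\to\mathcal Z$ is degraded with respect to $W$, written $Q\preccurlyeq W$, if there is a channel $\Phi:\mathcal Y\to\mathcal Z$ with $Q(z|x)=\sum_{y}W(y|x)\Phi(z|y)$ for all $x,z$. $|Q|$ denotes the output alphabet size of $Q$. Merging two distinct output letters $\alpha,\beta$ of a channel $W$ produces the channel $Q$ with output alphabet $(\mathcal Y\setminus\{\alpha,\beta\})\cup\{\gamma\}$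 ($\gamma$ a new symbol), $Q(\gamma|x)=W(\alpha|x)+W(\beta|x)$ and $Q(y|x)=W(y|x)$ for all other $y$. Greedy-merge: starting from $W$, repeatedly merge the pair of output letters whose merger gives the smallest decrease in mutual information, until the output alphabet has $L$ letters. The constant is $$\nu(n)=\frac{\pi n(n-1)}{2\left(\sqrt{1+\frac{1}{2(n-1)}}-1\right)^2}\left(\frac{2n}{\Gamma\!\left(1+\frac{n-1}{2}\right)}\right)^{\frac{2}{n-1}},$$ where $\pi$ here is the number $3.14159\ldots$ and $\Gamma$ is the Gamma function. *)

(* Defs.v *)
From Stdlib Require Import Reals Lra Lia List Arith.
Import ListNotations.
Open Scope R_scope.

Definition fsum (n : nat) (f : nat -> R) : R :=
  fold_right Rplus 0 (map f (seq 0 n)).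

(* A channel with input alphabet X = {0,..,nx-1} is represented by the list
   of its output columns: an output letter y is a column c with c x = W(y|x).
   The output alphabet size |W| is the length of the list.  Mutual
   information only depends on the (multi)set of columns, so the actual names
   of the output letters are immaterial. *)
Definition column := nat -> R.
Definition channel := list column.
Definition zcol : column := fun _ => 0.

Definition is_input_dist (nx : nat) (pi : nat -> R) : Prop :=
  (forall x, (x < nx)%nat -> 0 < pi x) /\ fsum nx pi = 1.

Definition is_channel (nx : nat) (W : channel) : Prop :=
  (forall c, In c W -> forall x, (x < nx)%nat -> 0 <= c x) /\
  (forall x, (x < nx)%nat -> fold_right Rplus 0 (map (fun c => c x) W) = 1).

Definition out_prob (nx : nat) (pi : nat -> R) (c : column) : R :=
  fsum nx (fun x => pi x * c x).

(* pi(x) W(y|x) ln (W(y|x)/pi(y)), with the convention 0 ln 0 = 0 *)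
Definition mi_term (p w py : R) : R :=
  if Req_EM_T w 0 then 0 else p * w * ln (w / py).

Definition MI (nx : nat) (pi : nat -> R) (W : channel) : R :=
  fold_right Rplus 0
    (map (fun c => fsum nx (fun x => mi_term (pi x) (c x) (out_prob nx pi c))) W).

Definition degraded (nx : nat) (Q W : channel) : Prop :=
  exists Phi : nat -> nat -> R,
    (forall y z, (y < length W)%nat -> (z < length Q)%nat -> 0 <= Phi y z) /\
    (forall y, (y < length W)%nat -> fsum (length Q) (fun z => Phi y z) = 1) /\
    (forall z x, (z < length Q)%nat -> (x < nx)%nat ->
        nth z Q zcol x = fsum (length W) (fun y => nth y W zcol x * Phi y z)).

Definition merge (W : channel) (i j : nat) : channel :=
  (fun x => nth i W zcol x + nth j W zcol x) ::
  map snd (filter (fun p => andb (negb (Nat.eqb (fst p) i)) (negb (Nat.eqb (fst p) j)))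
                  (combine (seq 0 (length W)) W)).

(* one greedy step: merge a pair minimizing the decrease of mutual information
   (ties broken arbitrarily) *)
Definition greedy_step (nx : nat) (pi : nat -> R) (Q Q' : channel) : Prop :=
  exists i j, (i < j)%nat /\ (j < length Q)%nat /\ Q' = merge Q i j /\
    forall i' j', (i' < j')%nat -> (j' < length Q)%nat ->
      MI nx pi Q - MI nx pi (merge Q i j) <= MI nx pi Q - MI nx pi (merge Q i' j').

Inductive greedy_merge (nx : nat) (pi : nat -> R) (L : nat) : channel -> channel -> Prop :=
| gm_done : forall Q, (length Q <= L)%nat -> greedy_merge nx pi L Q Q
| gm_step : forall Q Q' R, (L < length Q)%nat -> greedy_step nx pi Q Q' ->
    greedy_merge nx pi L Q' R -> greedy_merge nx pi L Q R.

(* gamma_half k = Gamma(k/2) for k >= 1 (Gamma(1/2) = sqrt PI, Gamma(1) = 1,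
   Gamma(s+1) = s Gamma(s)).  Value at k = 0 is irrelevant. *)
Fixpoint gamma_half (k : nat) : R :=
  match k with
  | O => 0
  | S O => sqrt PI
  | S (S O) => 1
  | S (S k') => INR k' / 2 * gamma_half k'
  end.

(* nu(n); note Gamma(1 + (n-1)/2) = gamma_half (n+1) *)
Definition nu (n : nat) : R :=
  PI * INR n * (INR n - 1) /
    (2 * (sqrt (1 + 1 / (2 * (INR n - 1))) - 1) ^ 2) *
  Rpower (2 * INR n / gamma_half (n + 1)) (2 / (INR n - 1)).

(* Main.v *)
Require Import Defs.
From Stdlib Require Import Reals Lra Lia List Arith Classical ZArith.
Import ListNotations.
Open Scope R_scope.


Definition sumR (l : list R) : R := fold_right Rplus 0 l.

Lemma sumR_app l1 l2 : sumR (l1 ++ l2) = sumR l1 + sumR l2.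
Proof. induction l1; simpl; [lra|]. unfold sumR in *; simpl; rewrite IHl1; lra. Qed.

Lemma sumR_map_add {A} (f g : A -> R) l :
  sumR (map (fun a => f a + g a) l) = sumR (map f l) + sumR (map g l).
Proof. induction l; unfold sumR in *; simpl; [lra|]. rewrite IHl; lra. Qed.

Lemma sumR_map_scal {A} (c : R) (f : A -> R) l :
  sumR (map (fun a => c * f a) l) = c * sumR (map f l).
Proof. induction l; unfold sumR in *; simpl; [lra|]. rewrite IHl; lra. Qed.

Lemma sumR_map_le {A} (f g : A -> R) l :
  (forall a, In a l -> f a <= g a) -> sumR (map f l) <= sumR (map g l).
Proof.
  induction l; intros H; unfold sumR in *; simpl; [lra|].
  assert (f a <= g a) by (apply H; left; auto).
  assert (fold_right Rplus 0 (map f l) <= fold_right Rplus 0 (map g l)) by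
    (apply IHl; intros; apply H; right; auto). lra.
Qed.

Lemma sumR_map_lt {A} (f g : A -> R) l :
  l <> nil -> (forall a, In a l -> f a < g a) -> sumR (map f l) < sumR (map g l).
Proof.
  induction l; intros Hn H; [congruence|]. unfold sumR in *; simpl.
  assert (f a < g a) by (apply H; left; auto).
  destruct l.
  - simpl; lra.
  - assert (fold_right Rplus 0 (map f (a0::l)) < fold_right Rplus 0 (map g (a0::l))) by
     (apply IHl; [congruence| intros; apply H; right; auto]). lra.
Qed.

Lemma sumR_map_ext {A} (f g : A -> R) l :
  (forall a, In a l -> f a = g a) -> sumR (map f l) = sumR (map g l).
Proof. intros H; f_equal; apply map_ext_in; auto. Qed.

Lemma sumR_map_nonneg {A} (f : A -> R) l :
  (forall a, In a l -> 0 <= f a) -> 0 <= sumR (map f l).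
Proof.
  intros H. replace 0 with (sumR (map (fun _ => 0) l)).
  - apply sumR_map_le; auto.
  - induction l; unfold sumR in *; simpl; auto. rewrite IHl; [lra|]. intros; apply H; right; auto.
Qed.

Lemma sumR_const {A} (c : R) (l : list A) : sumR (map (fun _ => c) l) = INR (length l) * c.
Proof. induction l; unfold sumR in *; cbn [map fold_right length]; [simpl; lra|]. rewrite IHl. rewrite S_INR; lra. Qed.

Lemma fsum_eq n f : fsum n f = sumR (map f (seq 0 n)).
Proof. reflexivity. Qed.

Lemma fsum_S n f : fsum (S n) f = fsum n f + f n.
Proof. rewrite !fsum_eq, seq_S, map_app, sumR_app. simpl. unfold sumR; simpl. lra. Qed.

Lemma fsum_0 f : fsum 0 f = 0.
Proof. reflexivity. Qed.

Lemma fsum_ext n f g : (forall x, (x < n)%nat -> f x = g x) -> fsum n f = fsum n g.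
Proof. intros H. rewrite !fsum_eq. apply sumR_map_ext. intros a Ha. apply in_seq in Ha. apply H; lia. Qed.

Lemma fsum_le n f g : (forall x, (x < n)%nat -> f x <= g x) -> fsum n f <= fsum n g.
Proof. intros H. rewrite !fsum_eq. apply sumR_map_le. intros a Ha. apply in_seq in Ha. apply H; lia. Qed.

Lemma fsum_lt n f g : (0 < n)%nat -> (forall x, (x < n)%nat -> f x < g x) -> fsum n f < fsum n g.
Proof. intros Hn H. rewrite !fsum_eq. apply sumR_map_lt.
  - destruct n; [lia|]. simpl; congruence.
  - intros a Ha. apply in_seq in Ha. apply H; lia. Qed.

Lemma fsum_nonneg n f : (forall x, (x < n)%nat -> 0 <= f x) -> 0 <= fsum n f.
Proof. intros H. rewrite fsum_eq. apply sumR_map_nonneg. intros a Ha. apply in_seq in Ha. apply H; lia. Qed.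

Lemma fsum_add n f g : fsum n (fun x => f x + g x) = fsum n f + fsum n g.
Proof. apply sumR_map_add. Qed.

Lemma fsum_scal n c f : fsum n (fun x => c * f x) = c * fsum n f.
Proof. apply sumR_map_scal. Qed.

Lemma fsum_const n c : fsum n (fun _ => c) = INR n * c.
Proof. rewrite fsum_eq, sumR_const, length_seq. auto. Qed.

Lemma fsum_swap n m (F : nat -> nat -> R) :
  fsum n (fun a => fsum m (fun b => F a b)) = fsum m (fun b => fsum n (fun a => F a b)).
Proof.
  induction n.
  - rewrite fsum_0. rewrite (fsum_ext m _ (fun _ => 0)) by (intros; apply fsum_0). rewrite fsum_const; lra.
  - rewrite fsum_S, IHn, <- fsum_add. apply fsum_ext; intros. rewrite fsum_S; auto.
Qed.

Lemma fsum_pick n (F : nat -> R) (P : nat -> bool) k :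
  (k < n)%nat -> (forall y, (y < n)%nat -> P y = true <-> y = k) ->
  fsum n (fun y => if P y then F y else 0) = F k.
Proof.
  intros Hk HP. induction n; [lia|].
  rewrite fsum_S. destruct (Nat.eq_dec k n).
  - subst. replace (P n) with true by (symmetry; apply HP; lia).
    rewrite (fsum_ext n _ (fun _ => 0)). rewrite fsum_const; lra.
    intros x Hx. destruct (P x) eqn:E; auto. apply HP in E; lia.
  - rewrite IHn by (lia || (intros; apply HP; lia)).
    destruct (P n) eqn:E; [apply HP in E; lia|lra].
Qed.

Lemma fsum_split n (F : nat -> R) j : (j < n)%nat ->
  fsum n F = F j + fsum n (fun x => if Nat.eqb x j then 0 else F x).
Proof.
  intros Hj. rewrite <- (fsum_pick n F (fun x => Nat.eqb x j) j Hj).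
  rewrite <- fsum_add. apply fsum_ext. intros. destruct (Nat.eqb x j); lra.
  intros; split; intros; [apply Nat.eqb_eq; auto| apply Nat.eqb_eq; auto].
Qed.

Lemma map_nth_seq_gen {A B} (g : A -> B) (l : list A) d k :
  map g l = map (fun i => g (nth (i - k) l d)) (seq k (length l)).
Proof.
  revert k; induction l; intros k; simpl; auto. f_equal.
  - rewrite Nat.sub_diag; auto.
  - rewrite (IHl (S k)). apply map_ext_in. intros i Hi. apply in_seq in Hi.
    replace (i - k)%nat with (S (i - S k)) by lia. auto.
Qed.

Lemma map_nth_seq {A B} (g : A -> B) (l : list A) d :
  map g l = map (fun i => g (nth i l d)) (seq 0 (length l)).
Proof. rewrite (map_nth_seq_gen g l d 0). apply map_ext; intros; rewrite Nat.sub_0_r; auto. Qed.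

Lemma sumR_as_fsum {A} (g : A -> R) (l : list A) d :
  sumR (map g l) = fsum (length l) (fun i => g (nth i l d)).
Proof. rewrite (map_nth_seq g l d). reflexivity. Qed.

Lemma filter_combine (l : channel) k0 (P : nat -> bool) :
  map snd (filter (fun p => P (fst p)) (combine (seq k0 (length l)) l)) =
  map (fun k => nth (k - k0) l zcol) (filter P (seq k0 (length l))).
Proof.
  revert k0; induction l; intros k0; simpl; auto.
  destruct (P k0); simpl.
  - rewrite Nat.sub_diag. f_equal. rewrite IHl. apply map_ext_in.
    intros i Hi. apply filter_In in Hi. destruct Hi as [Hi _]. apply in_seq in Hi.
    replace (i - k0)%nat with (S (i - S k0)) by lia. auto.
  - rewrite IHl. apply map_ext_in.
    intros i Hi. apply filter_In in Hi. destruct Hi as [Hi _]. apply in_seq in Hi.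
    replace (i - k0)%nat with (S (i - S k0)) by lia. auto.
Qed.

Lemma filter_all {A} (P : A -> bool) l : (forall x, In x l -> P x = true) -> filter P l = l.
Proof. induction l; simpl; intros H; auto. rewrite H by auto. rewrite IHl; auto. Qed.

Definition Fl (i j n : nat) : list nat := seq 0 i ++ seq (S i) (j - S i) ++ seq (S j) (n - S j).

Definition Pij (i j : nat) (k : nat) : bool := andb (negb (Nat.eqb k i)) (negb (Nat.eqb k j)).

Lemma seq_decomp i j n : (i < j < n)%nat ->
  seq 0 n = seq 0 i ++ [i] ++ seq (S i) (j - S i) ++ [j] ++ seq (S j) (n - S j).
Proof.
  intros H.
  replace n with (i + (1 + ((j - S i) + (1 + (n - S j)))))%nat at 1 by lia.
  rewrite seq_app. f_equal. simpl.
  rewrite seq_app. f_equal. replace (S i + (j - S i))%nat with j by lia. simpl. auto.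
Qed.

Lemma filter_Pij i j n : (i < j < n)%nat -> filter (Pij i j) (seq 0 n) = Fl i j n.
Proof.
  intros H. rewrite seq_decomp with (i:=i) (j:=j) by lia. unfold Fl.
  rewrite !filter_app.
  assert (Hi : filter (Pij i j) [i] = []) by (simpl; unfold Pij; rewrite Nat.eqb_refl; reflexivity).
  assert (Hj : filter (Pij i j) [j] = []) by (simpl; unfold Pij; rewrite Nat.eqb_refl, Bool.andb_false_r; reflexivity).
  rewrite Hi, Hj. simpl.
  rewrite !filter_all; auto; intros x Hx; apply in_seq in Hx; unfold Pij;
   rewrite (proj2 (Nat.eqb_neq x i)) by lia; rewrite (proj2 (Nat.eqb_neq x j)) by lia; auto.
Qed.

Definition mcol (Q : channel) i j : column := fun x => nth i Q zcol x + nth j Q zcol x.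

Lemma merge_eq Q i j : (i < j < length Q)%nat ->
  merge Q i j = mcol Q i j :: map (fun k => nth k Q zcol) (Fl i j (length Q)).
Proof.
  intros H. unfold merge. f_equal.
  change (fun p : nat * column => (negb (fst p =? i) && negb (fst p =? j))%bool)
    with (fun p : nat * column => Pij i j (fst p)).
  rewrite filter_combine, filter_Pij by lia. apply map_ext; intros; rewrite Nat.sub_0_r; auto.
Qed.

Lemma length_Fl i j n : (i < j < n)%nat -> length (Fl i j n) = (n - 2)%nat.
Proof. intros H. unfold Fl. rewrite !length_app, !length_seq. lia. Qed.

Lemma length_merge Q i j : (i < j < length Q)%nat -> length (merge Q i j) = (length Q - 1)%nat.
Proof. intros H. rewrite merge_eq by auto. cbn [length]. rewrite length_map. rewrite length_Fl by auto. lia. Qed.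

Lemma sumR_cons a l : sumR (a :: l) = a + sumR l.
Proof. reflexivity. Qed.

Lemma sum_merge (g : column -> R) Q i j : (i < j < length Q)%nat ->
  sumR (map g (merge Q i j)) = sumR (map g Q) - g (nth i Q zcol) - g (nth j Q zcol) + g (mcol Q i j).
Proof.
  intros H. rewrite merge_eq by auto. rewrite (map_nth_seq g Q zcol).
  rewrite seq_decomp with (i:=i) (j:=j) (n := length Q) by lia. unfold Fl.
  cbn [map]. rewrite !sumR_cons, map_map, !map_app, !sumR_app. cbn [map]. rewrite !sumR_cons.
  unfold sumR. simpl. lra.
Qed.

Lemma In_merge Q i j c : (i < j < length Q)%nat -> In c (merge Q i j) ->
  c = mcol Q i j \/ In c Q.
Proof.
  intros H Hc. rewrite merge_eq in Hc by auto. destruct Hc as [Hc|Hc]; [left; auto|right].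
  apply in_map_iff in Hc. destruct Hc as [k [<- Hk]]. apply nth_In.
  unfold Fl in Hk. rewrite !in_app_iff, !in_seq in Hk. lia.
Qed.

Lemma nth_Fl i j n r : (i < j < n)%nat -> (r < n - 2)%nat ->
  nth r (Fl i j n) 0%nat = (if r <? i then r else if r <? j - 1 then S r else S (S r))%nat.
Proof.
  intros H Hr. unfold Fl.
  destruct (r <? i)%nat eqn:E1.
  - apply Nat.ltb_lt in E1. rewrite app_nth1 by (rewrite length_seq; lia). rewrite seq_nth by lia. lia.
  - apply Nat.ltb_ge in E1. rewrite app_nth2 by (rewrite length_seq; lia). rewrite length_seq.
    destruct (r <? j - 1)%nat eqn:E2.
    + apply Nat.ltb_lt in E2. rewrite app_nth1 by (rewrite length_seq; lia). rewrite seq_nth by lia. lia.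
    + apply Nat.ltb_ge in E2. rewrite app_nth2 by (rewrite length_seq; lia). rewrite length_seq.
      rewrite seq_nth by lia. lia.
Qed.

(* index map of a merge *)
Definition gm (i j y : nat) : nat :=
  if (y <? i)%nat then S y else if (y =? i)%nat then 0%nat else if (y <? j)%nat then y
  else if (y =? j)%nat then 0%nat else (y - 1)%nat.

Definition ind (b : bool) : R := if b then 1 else 0.

Lemma gm_lt i j n y : (i < j < n)%nat -> (y < n)%nat -> (gm i j y < n - 1)%nat.
Proof.
  intros H Hy. unfold gm.
  destruct (y <? i)%nat eqn:E1; [apply Nat.ltb_lt in E1; lia|apply Nat.ltb_ge in E1].
  destruct (y =? i)%nat eqn:E2; [lia|apply Nat.eqb_neq in E2].
  destruct (y <? j)%nat eqn:E3; [apply Nat.ltb_lt in E3; lia|apply Nat.ltb_ge in E3].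
  destruct (y =? j)%nat eqn:E4; [lia|apply Nat.eqb_neq in E4]. lia.
Qed.

Lemma fsum_ind n (a : nat -> R) k : (k < n)%nat ->
  fsum n (fun y => a y * ind (y =? k)%nat) = a k.
Proof.
  intros Hk. rewrite <- (fsum_pick n a (fun y => (y =? k)%nat) k Hk).
  - apply fsum_ext; intros. unfold ind. destruct (x =? k)%nat; lra.
  - intros; apply Nat.eqb_eq.
Qed.

Ltac natcase := repeat match goal with
  | |- context [ (?a <? ?b)%nat ] => let E := fresh in destruct (a <? b)%nat eqn:E;
        [apply Nat.ltb_lt in E | apply Nat.ltb_ge in E]
  | |- context [ (?a =? ?b)%nat ] => let E := fresh in destruct (a =? b)%nat eqn:E;
        [apply Nat.eqb_eq in E | apply Nat.eqb_neq in E]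
  end.

Lemma gm_zero i j y : (i < j)%nat -> ind (gm i j y =? 0)%nat = ind (y =? i)%nat + ind (y =? j)%nat.
Proof. intros H. unfold gm, ind. natcase; try lia; lra. Qed.

Lemma gm_S i j n y r : (i < j < n)%nat -> (r < n - 2)%nat ->
  (gm i j y =? S r)%nat = (y =? (if r <? i then r else if r <? j - 1 then S r else S (S r)))%nat.
Proof. intros H Hr. apply Bool.eq_iff_eq_true. rewrite !Nat.eqb_eq. unfold gm. natcase; lia. Qed.

Lemma nth_merge Q i j z x : (i < j < length Q)%nat -> (z < length Q - 1)%nat ->
  nth z (merge Q i j) zcol x = fsum (length Q) (fun y => nth y Q zcol x * ind (gm i j y =? z)%nat).
Proof.
  intros H Hz. rewrite merge_eq by auto.
  destruct z as [|r].
  - simpl. unfold mcol.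
    rewrite (fsum_ext _ _ (fun y => nth y Q zcol x * ind (y =? i)%nat + nth y Q zcol x * ind (y =? j)%nat)).
    + rewrite fsum_add, !fsum_ind by lia. auto.
    + intros y Hy. rewrite gm_zero by lia. lra.
  - simpl. rewrite (nth_indep _ _ (nth 0 Q zcol)) by (rewrite length_map, length_Fl; lia).
    change (nth 0 Q zcol) with ((fun k => nth k Q zcol) 0%nat). rewrite map_nth. rewrite nth_Fl by lia.
    rewrite (fsum_ext _ _ (fun y => nth y Q zcol x * ind (y =? (if r <? i then r else if r <? j - 1 then S r else S (S r)))%nat)).
    + rewrite fsum_ind; auto. natcase; lia.
    + intros y Hy. rewrite (gm_S i j (length Q)) by lia. auto.
Qed.

Definition valid nx pi (Q : channel) : Prop :=
  is_channel nx Q /\ forall c, In c Q -> 0 < out_prob nx pi c.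

Lemma out_prob_mcol nx pi Q i j :
  out_prob nx pi (mcol Q i j) = out_prob nx pi (nth i Q zcol) + out_prob nx pi (nth j Q zcol).
Proof. unfold out_prob, mcol. rewrite <- fsum_add. apply fsum_ext; intros; lra. Qed.

Lemma valid_merge nx pi Q i j : (i < j < length Q)%nat -> valid nx pi Q -> valid nx pi (merge Q i j).
Proof.
  intros H [[Hn Hs] Hp]. split; [split|].
  - intros c Hc x Hx. destruct (In_merge Q i j c H Hc) as [->|Hc'].
    + unfold mcol. assert (0 <= nth i Q zcol x) by (apply Hn; [apply nth_In; lia|auto]).
      assert (0 <= nth j Q zcol x) by (apply Hn; [apply nth_In; lia|auto]). lra.
    + apply Hn; auto.
  - intros x Hx. change (sumR (map (fun c : column => c x) (merge Q i j)) = 1).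
    rewrite sum_merge by auto. pose proof (Hs x Hx) as Hsx. change (sumR (map (fun c : column => c x) Q) = 1) in Hsx.
    rewrite Hsx. unfold mcol. lra.
  - intros c Hc. destruct (In_merge Q i j c H Hc) as [->|Hc'].
    + rewrite out_prob_mcol. assert (0 < out_prob nx pi (nth i Q zcol)) by (apply Hp; apply nth_In; lia).
      assert (0 < out_prob nx pi (nth j Q zcol)) by (apply Hp; apply nth_In; lia). lra.
    + apply Hp; auto.
Qed.

Definition Inv nx (W R : channel) (f : nat -> nat) : Prop :=
  (forall y, (y < length W)%nat -> (f y < length R)%nat) /\
  (forall z x, (z < length R)%nat -> (x < nx)%nat ->
     nth z R zcol x = fsum (length W) (fun y => nth y W zcol x * ind (f y =? z)%nat)).

Lemma Inv_refl nx W : Inv nx W W (fun y => y).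
Proof. split; auto. intros z x Hz Hx. rewrite fsum_ind; auto. Qed.

Lemma fsum_ind_sum n k : (k < n)%nat -> fsum n (fun z => ind (k =? z)%nat) = 1.
Proof.
  intros Hk. rewrite <- (fsum_ind n (fun _ => 1) k Hk). apply fsum_ext; intros.
  rewrite Nat.eqb_sym. lra.
Qed.

Lemma Inv_step nx Q i j R f : (i < j < length Q)%nat -> Inv nx (merge Q i j) R f ->
  Inv nx Q R (fun y => f (gm i j y)).
Proof.
  intros H [H1 H2]. rewrite length_merge in H1, H2 by auto. split.
  - intros y Hy. apply H1. apply gm_lt with (n := length Q); auto.
  - intros z x Hz Hx. rewrite H2 by auto.
    rewrite (fsum_ext _ _ (fun y' => fsum (length Q) (fun y => nth y Q zcol x * ind (gm i j y =? y')%nat * ind (f y' =? z)%nat))).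
    2:{ intros y' Hy'. rewrite nth_merge by auto. rewrite Rmult_comm, <- fsum_scal.
        apply fsum_ext; intros; lra. }
    rewrite fsum_swap. apply fsum_ext. intros y Hy.
    rewrite (fsum_ext _ _ (fun y' => (nth y Q zcol x * ind (f y' =? z)%nat) * ind (y' =? gm i j y)%nat)).
    + rewrite fsum_ind; auto. apply gm_lt with (n := length Q); auto.
    + intros y' _. rewrite (Nat.eqb_sym y'). lra.
Qed.

Lemma greedy_Inv nx pi L W R : greedy_merge nx pi L W R -> exists f, Inv nx W R f.
Proof.
  induction 1.
  - exists (fun y => y). apply Inv_refl.
  - destruct IHgreedy_merge as [f Hf]. destruct H0 as [i [j [Hij [Hj [-> _]]]]].
    exists (fun y => f (gm i j y)). apply Inv_step; auto.
Qed.

Lemma Inv_degraded nx W R f : Inv nx W R f -> degraded nx R W.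
Proof.
  intros [H1 H2]. exists (fun y z => ind (f y =? z)%nat). split; [|split].
  - intros; unfold ind; destruct (f y =? z)%nat; lra.
  - intros y Hy. apply fsum_ind_sum. auto.
  - intros z x Hz Hx. apply H2; auto.
Qed.

Lemma greedy_length nx pi L W R : greedy_merge nx pi L W R -> (length R <= L)%nat.
Proof. induction 1; auto. Qed.

Lemma greedy_valid nx pi L W R : greedy_merge nx pi L W R -> valid nx pi W -> valid nx pi R.
Proof.
  induction 1; auto. intros Hv. apply IHgreedy_merge.
  destruct H0 as [i [j [Hij [Hj [-> _]]]]]. apply valid_merge; auto.
Qed.

Lemma argmin_list {A} (g : A -> R) (l : list A) : l <> nil ->
  exists a, In a l /\ forall b, In b l -> g a <= g b.
Proof.
  induction l; intros Hn; [congruence|].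
  destruct l as [|a' l'].
  - exists a. split; [left; auto|]. intros b [<-|[]]; lra.
  - destruct IHl as [m [Hm Hmin]]; [congruence|].
    destruct (Rle_dec (g a) (g m)).
    + exists a. split; [left; auto|]. intros b [<-|Hb]; [lra|]. specialize (Hmin b Hb); lra.
    + exists m. split; [right; auto|]. intros b [<-|Hb]; [lra|]. auto.
Qed.

Definition pairs (n : nat) : list (nat * nat) :=
  flat_map (fun j => map (fun i => (i, j)) (seq 0 j)) (seq 0 n).

Lemma in_pairs n i j : In (i, j) (pairs n) <-> (i < j < n)%nat.
Proof.
  unfold pairs. rewrite in_flat_map. split.
  - intros [j' [Hj' Hin]]. apply in_map_iff in Hin. destruct Hin as [i' [E Hi']].
    inversion E; subst. apply in_seq in Hj'. apply in_seq in Hi'. lia.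
  - intros H. exists j. split; [apply in_seq; lia|]. apply in_map_iff. exists i. split; auto. apply in_seq; lia.
Qed.

Lemma greedy_exists nx pi L W : (1 <= L)%nat -> exists R, greedy_merge nx pi L W R.
Proof.
  remember (length W) as n eqn:En. revert W En.
  induction n as [n IH] using lt_wf_ind. intros W En HL.
  destruct (le_lt_dec (length W) L) as [Hle|Hlt].
  - exists W. constructor; auto.
  - destruct (Nat.lt_ge_cases (length W) 2) as [Hs|Hs].
    + lia.
    + destruct (argmin_list (fun p => MI nx pi W - MI nx pi (merge W (fst p) (snd p))) (pairs (length W)))
        as [[i j] [Hin Hmin]].
      { intros E. assert (In (0%nat, 1%nat) (pairs (length W))) by (apply in_pairs; lia). rewrite E in H; auto. }
      apply in_pairs in Hin.
      destruct (IH (length (merge W i j))) with (W := merge W i j) as [R HR]; auto.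
      { rewrite length_merge; lia. }
      exists R. apply gm_step with (Q' := merge W i j); auto.
      exists i, j. split; [lia|split; [lia|split; auto]].
      intros i' j' H1 H2. apply (Hmin (i', j')). apply in_pairs; lia.
Qed.

Lemma ln_le_sub1 y : 0 < y -> ln y <= y - 1.
Proof. intros Hy. pose proof (exp_ineq1_le (ln y)). rewrite exp_ln in H by auto. lra. Qed.

Lemma ln_sub a b : 0 < a -> 0 < b -> ln a - ln b = ln (a / b).
Proof. intros. unfold Rdiv. rewrite ln_mult, ln_Rinv; try lra. apply Rinv_0_lt_compat; auto. Qed.

Lemma kl_core p wa wb A B : 0 < p -> 0 < wa -> 0 < wb -> 0 < A -> 0 < B ->
  p * wa * ln (wa / A) + p * wb * ln (wb / B) - p * (wa + wb) * ln ((wa + wb) / (A + B))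
  <= (A + B) * (sqrt (p * wa / A) - sqrt (p * wb / B)) ^ 2.
Proof.
  intros Hp Ha Hb HA HB.
  set (S := wa + wb).
  assert (HS : 0 < S) by (unfold S; lra).
  assert (E1 : ln (wa / A) - ln (S / (A + B)) <= wa / A / (S / (A + B)) - 1).
  { rewrite ln_sub. apply ln_le_sub1. all: apply Rdiv_lt_0_compat; try lra; apply Rdiv_lt_0_compat; lra. }
  assert (E2 : ln (wb / B) - ln (S / (A + B)) <= wb / B / (S / (A + B)) - 1).
  { rewrite ln_sub. apply ln_le_sub1. all: apply Rdiv_lt_0_compat; try lra; apply Rdiv_lt_0_compat; lra. }
  set (sa := sqrt (wa / A)). set (sb := sqrt (wb / B)).
  assert (Hsa : sa * sa = wa / A) by (apply sqrt_sqrt; apply Rlt_le, Rdiv_lt_0_compat; lra).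
  assert (Hsb : sb * sb = wb / B) by (apply sqrt_sqrt; apply Rlt_le, Rdiv_lt_0_compat; lra).
  assert (Ewa : wa = A * (sa * sa)) by (rewrite Hsa; field; lra).
  assert (Ewb : wb = B * (sb * sb)) by (rewrite Hsb; field; lra).
  assert (Q1 : sqrt (p * wa / A) = sqrt p * sa).
  { unfold sa. rewrite <- sqrt_mult by (lra || (apply Rlt_le, Rdiv_lt_0_compat; lra)). f_equal. field. lra. }
  assert (Q2 : sqrt (p * wb / B) = sqrt p * sb).
  { unfold sb. rewrite <- sqrt_mult by (lra || (apply Rlt_le, Rdiv_lt_0_compat; lra)). f_equal. field. lra. }
  rewrite Q1, Q2.
  assert (Hpp : sqrt p * sqrt p = p) by (apply sqrt_sqrt; lra).
  assert (L1 : p * wa * ln (wa / A) + p * wb * ln (wb / B) - p * S * ln (S / (A + B)) <=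
               p * (wa * (wa / A / (S / (A + B)) - 1) + wb * (wb / B / (S / (A + B)) - 1))).
  { replace (p * wa * ln (wa / A) + p * wb * ln (wb / B) - p * S * ln (S / (A + B))) with
      (p * (wa * (ln (wa / A) - ln (S / (A + B))) + wb * (ln (wb / B) - ln (S / (A + B))))) by (unfold S; ring).
    apply Rmult_le_compat_l; [lra|]. apply Rplus_le_compat; apply Rmult_le_compat_l; lra. }
  assert (Key : wa * (wa / A / (S / (A + B)) - 1) + wb * (wb / B / (S / (A + B)) - 1) =
                (A + B) * (sa - sb) ^ 2 - (sa - sb) ^ 2 * (A * sa - B * sb) ^ 2 / S).
  { assert (ES : A * (sa * sa) + B * (sb * sb) <> 0) by lra.
    unfold S. rewrite Ewa, Ewb. field. lra. }
  rewrite Key in L1.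
  assert (0 <= (sa - sb) ^ 2 * (A * sa - B * sb) ^ 2 / S).
  { apply Rmult_le_pos; [|apply Rlt_le, Rinv_0_lt_compat; auto]. apply Rmult_le_pos; apply pow2_ge_0. }
  replace ((A + B) * (sqrt p * sa - sqrt p * sb) ^ 2) with ((sqrt p * sqrt p) * ((A + B) * (sa - sb) ^ 2))
    by ring. rewrite Hpp.
  fold S. nra.
Qed.

Lemma kl_half p wb A B : 0 < p -> 0 < wb -> 0 < A -> 0 < B ->
  p * wb * ln (wb / B) - p * wb * ln (wb / (A + B)) <= (A + B) * (p * wb / B).
Proof.
  intros Hp Hb HA HB.
  replace (p * wb * ln (wb / B) - p * wb * ln (wb / (A + B))) with (p * wb * (ln (wb / B) - ln (wb / (A + B)))) by ring.
  rewrite ln_sub by (apply Rdiv_lt_0_compat; lra).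
  replace (wb / B / (wb / (A + B))) with ((A + B) / B) by (field; lra).
  assert (ln ((A + B) / B) <= (A + B) / B - 1) by (apply ln_le_sub1; apply Rdiv_lt_0_compat; lra).
  assert ((A + B) / B - 1 <= (A + B) / B) by lra.
  assert (0 < p * wb) by (apply Rmult_lt_0_compat; lra).
  replace ((A + B) * (p * wb / B)) with (p * wb * ((A + B) / B)) by (field; lra).
  apply Rmult_le_compat_l; lra.
Qed.

Lemma kl_x p wa wb A B : 0 < p -> 0 <= wa -> 0 <= wb -> 0 < A -> 0 < B ->
  mi_term p wa A + mi_term p wb B - mi_term p (wa + wb) (A + B)
  <= (A + B) * (sqrt (p * wa / A) - sqrt (p * wb / B)) ^ 2.
Proof.
  intros Hp Ha Hb HA HB. unfold mi_term.
  destruct (Req_EM_T wa 0) as [Ea|Ea]; destruct (Req_EM_T wb 0) as [Eb|Eb];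
    destruct (Req_EM_T (wa + wb) 0) as [Es|Es].
  - assert (0 <= (A + B) * (sqrt (p * wa / A) - sqrt (p * wb / B)) ^ 2) by (apply Rmult_le_pos; [lra|apply pow2_ge_0]). lra.
  - lra.
  - lra.
  - subst wa. rewrite Rplus_0_l.
    replace (p * 0 / A) with 0 by (field; lra). rewrite sqrt_0.
    replace ((0 - sqrt (p * wb / B)) ^ 2) with (sqrt (p * wb / B) * sqrt (p * wb / B)) by ring.
    rewrite sqrt_sqrt by (apply Rlt_le, Rdiv_lt_0_compat; try apply Rmult_lt_0_compat; lra).
    pose proof (kl_half p wb A B Hp ltac:(lra) HA HB). replace (0 + wb) with wb by ring. lra.
  - lra.
  - subst wb. rewrite Rplus_0_r.
    replace (p * 0 / B) with 0 by (field; lra). rewrite sqrt_0.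
    replace ((sqrt (p * wa / A) - 0) ^ 2) with (sqrt (p * wa / A) * sqrt (p * wa / A)) by ring.
    rewrite sqrt_sqrt by (apply Rlt_le, Rdiv_lt_0_compat; try apply Rmult_lt_0_compat; lra).
    pose proof (kl_half p wa B A Hp ltac:(lra) HB HA). rewrite (Rplus_comm B A) in H. replace (wa + 0) with wa by ring. lra.
  - lra.
  - apply kl_core; lra.
Qed.

Definition fcol nx pi (c : column) : R := fsum nx (fun x => mi_term (pi x) (c x) (out_prob nx pi c)).
Definition sv nx pi (c : column) (x : nat) : R := sqrt (pi x * c x / out_prob nx pi c).

Lemma MI_eq nx pi Q : MI nx pi Q = sumR (map (fcol nx pi) Q).
Proof. reflexivity. Qed.

Lemma cost_merge nx pi Q i j : (i < j < length Q)%nat ->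
  MI nx pi Q - MI nx pi (merge Q i j) = fcol nx pi (nth i Q zcol) + fcol nx pi (nth j Q zcol) - fcol nx pi (mcol Q i j).
Proof. intros H. rewrite !MI_eq, sum_merge by auto. ring. Qed.

Lemma cost_bound nx pi (ca cb : column) :
  (forall x, (x < nx)%nat -> 0 < pi x) ->
  (forall x, (x < nx)%nat -> 0 <= ca x) -> (forall x, (x < nx)%nat -> 0 <= cb x) ->
  0 < out_prob nx pi ca -> 0 < out_prob nx pi cb ->
  fcol nx pi ca + fcol nx pi cb - fcol nx pi (fun x => ca x + cb x) <=
  (out_prob nx pi ca + out_prob nx pi cb) * fsum nx (fun x => (sv nx pi ca x - sv nx pi cb x) ^ 2).
Proof.
  intros Hpi Ha Hb HA HB. unfold fcol.
  assert (Eo : out_prob nx pi (fun x => ca x + cb x) = out_prob nx pi ca + out_prob nx pi cb).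
  { unfold out_prob. rewrite <- fsum_add. apply fsum_ext; intros; lra. }
  rewrite Eo. rewrite <- fsum_scal.
  replace (fsum nx (fun x => mi_term (pi x) (ca x) (out_prob nx pi ca)) +
     fsum nx (fun x => mi_term (pi x) (cb x) (out_prob nx pi cb)) -
     fsum nx (fun x => mi_term (pi x) (ca x + cb x) (out_prob nx pi ca + out_prob nx pi cb)))
   with (fsum nx (fun x => mi_term (pi x) (ca x) (out_prob nx pi ca) + mi_term (pi x) (cb x) (out_prob nx pi cb)
         + (-1) * mi_term (pi x) (ca x + cb x) (out_prob nx pi ca + out_prob nx pi cb)))
   by (rewrite !fsum_add, fsum_scal; ring).
  apply fsum_le. intros x Hx. unfold sv.
  pose proof (kl_x (pi x) (ca x) (cb x) _ _ (Hpi x Hx) (Ha x Hx) (Hb x Hx) HA HB). lra.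
Qed.

Lemma fsum_off n j c : (j < n)%nat -> fsum n (fun x => if (x =? j)%nat then 0 else c) = (INR n - 1) * c.
Proof.
  intros Hj. pose proof (fsum_split n (fun _ => c) j Hj). rewrite fsum_const in H. lra.
Qed.

Lemma sphere_diam n (s t : nat -> R) j h :
  (j < n)%nat -> 0 <= h ->
  (forall x, (x < n)%nat -> 0 <= s x) -> (forall x, (x < n)%nat -> 0 <= t x) ->
  fsum n (fun x => s x ^ 2) = 1 -> fsum n (fun x => t x ^ 2) = 1 ->
  (forall i, (i < n)%nat -> s i <= s j) -> (forall i, (i < n)%nat -> t i <= t j) ->
  (forall i, (i < n)%nat -> i <> j -> - h <= s i - t i <= h) ->
  fsum n (fun x => (s x - t x) ^ 2) <= INR n * (INR n - 1) * h ^ 2.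
Proof.
  intros Hj Hh Hs Ht Ss St Ms Mt D.
  assert (Hn1 : 1 <= INR n) by (apply (le_INR 1); lia).
  assert (Spos : 0 < s j).
  { assert (1 <= INR n * s j ^ 2).
    { rewrite <- Ss, <- fsum_const. apply fsum_le. intros x Hx.
      pose proof (Ms x Hx); pose proof (Hs x Hx); nra. }
    destruct (Rle_lt_dec (s j) 0); [|auto]. pose proof (Hs j Hj). assert (s j = 0) by lra.
    rewrite H1 in H. lra. }
  assert (Tpos : 0 < t j).
  { assert (1 <= INR n * t j ^ 2).
    { rewrite <- St, <- fsum_const. apply fsum_le. intros x Hx.
      pose proof (Mt x Hx); pose proof (Ht x Hx); nra. }
    destruct (Rle_lt_dec (t j) 0); [|auto]. pose proof (Ht j Hj). assert (t j = 0) by lra.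
    rewrite H1 in H. lra. }
  rewrite (fsum_split n _ j Hj) in Ss. rewrite (fsum_split n _ j Hj) in St. rewrite (fsum_split n _ j Hj).
  set (Dsum := fsum n (fun x => if (x =? j)%nat then 0 else t x ^ 2 - s x ^ 2)).
  assert (EDs : s j ^ 2 - t j ^ 2 = Dsum).
  { unfold Dsum. rewrite (fsum_ext _ _ (fun x => (if (x =? j)%nat then 0 else t x ^ 2) + (-1) * (if (x =? j)%nat then 0 else s x ^ 2))).
    - rewrite fsum_add, fsum_scal. lra.
    - intros x _. destruct (x =? j)%nat; lra. }
  assert (Up : Dsum <= (INR n - 1) * (h * (s j + t j))).
  { unfold Dsum. rewrite <- (fsum_off n j) by auto. apply fsum_le. intros x Hx.
    destruct (x =? j)%nat eqn:E; [lra|]. apply Nat.eqb_neq in E.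
    pose proof (D x Hx E). pose proof (Ms x Hx). pose proof (Mt x Hx). pose proof (Hs x Hx). pose proof (Ht x Hx).
    assert (t x ^ 2 - s x ^ 2 = (t x - s x) * (t x + s x)) by ring. nra. }
  assert (Lo : - ((INR n - 1) * (h * (s j + t j))) <= Dsum).
  { unfold Dsum. replace (- ((INR n - 1) * (h * (s j + t j)))) with ((INR n - 1) * (- (h * (s j + t j)))) by ring.
    rewrite <- (fsum_off n j) by auto.
    apply fsum_le. intros x Hx.
    destruct (x =? j)%nat eqn:E; [lra|]. apply Nat.eqb_neq in E.
    pose proof (D x Hx E). pose proof (Ms x Hx). pose proof (Mt x Hx). pose proof (Hs x Hx). pose proof (Ht x Hx).
    assert (t x ^ 2 - s x ^ 2 = (t x - s x) * (t x + s x)) by ring. nra. }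
  assert (Dj : (s j - t j) ^ 2 <= ((INR n - 1) * h) ^ 2).
  { assert (E2 : s j ^ 2 - t j ^ 2 = (s j - t j) * (s j + t j)) by ring.
    assert (A1 : s j - t j <= (INR n - 1) * h).
    { apply (Rmult_le_reg_r (s j + t j)); [lra|]. nra. }
    assert (A2 : - ((INR n - 1) * h) <= s j - t j).
    { apply (Rmult_le_reg_r (s j + t j)); [lra|]. nra. }
    assert (0 <= (INR n - 1) * h) by nra. nra. }
  assert (Rest : fsum n (fun x => if (x =? j)%nat then 0 else (s x - t x) ^ 2) <= (INR n - 1) * h ^ 2).
  { rewrite <- (fsum_off n j) by auto. apply fsum_le. intros x Hx.
    destruct (x =? j)%nat eqn:E; [lra|]. apply Nat.eqb_neq in E. pose proof (D x Hx E). nra. }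
  nra.
Qed.

Fixpoint amax (s : nat -> R) (k : nat) : nat :=
  match k with
  | O => O
  | S k' => let j := amax s k' in if Rle_dec (s j) (s k') then k' else j
  end.

Lemma amax_spec s k : (0 < k)%nat -> (amax s k < k)%nat /\ forall i, (i < k)%nat -> s i <= s (amax s k).
Proof.
  induction k; intros Hk; [lia|].
  destruct k.
  - simpl. destruct (Rle_dec (s 0%nat) (s 0%nat)); split; try lia; intros i Hi; replace i with 0%nat by lia; lra.
  - destruct IHk as [H1 H2]; [lia|].
    change (amax s (S (S k))) with (let j := amax s (S k) in if Rle_dec (s j) (s (S k)) then S k else j).
    cbv zeta. destruct (Rle_dec (s (amax s (S k))) (s (S k))) as [r|r].
    + split; [lia|]. intros i Hi. destruct (Nat.eq_dec i (S k)); [subst; lra|]. specialize (H2 i ltac:(lia)). lra.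
    + split; [lia|]. intros i Hi. destruct (Nat.eq_dec i (S k)); [subst; lra|]. apply H2; lia.
Qed.

Definition digit (m : nat) (v : R) : nat := Nat.min (m - 1) (Z.to_nat (Int_part (v * INR m))).

Lemma digit_spec m v : (1 <= m)%nat -> 0 <= v <= 1 ->
  INR (digit m v) <= v * INR m <= INR (digit m v) + 1.
Proof.
  intros Hm Hv. unfold digit.
  destruct (base_Int_part (v * INR m)) as [B1 B2].
  set (z := Int_part (v * INR m)) in *.
  assert (Hm1 : 1 <= INR m) by (apply (le_INR 1); auto).
  assert (Hz : (0 <= z)%Z).
  { assert (-1 < IZR z) by nra. apply lt_IZR in H. lia. }
  assert (Ez : INR (Z.to_nat z) = IZR z) by (rewrite INR_IZR_INZ, Z2Nat.id; auto).
  destruct (Nat.le_gt_cases (Z.to_nat z) (m - 1)).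
  - rewrite Nat.min_r by auto. rewrite Ez. lra.
  - rewrite Nat.min_l by lia. rewrite minus_INR by auto. simpl.
    assert (INR m <= INR (Z.to_nat z)) by (apply le_INR; lia). nra.
Qed.

Lemma digit_close m v w : (1 <= m)%nat -> 0 <= v <= 1 -> 0 <= w <= 1 -> digit m v = digit m w ->
  - (1 / INR m) <= v - w <= 1 / INR m.
Proof.
  intros Hm Hv Hw E. pose proof (digit_spec m v Hm Hv). pose proof (digit_spec m w Hm Hw).
  rewrite E in H. assert (Hm1 : 1 <= INR m) by (apply (le_INR 1); auto).
  split.
  - apply (Rmult_le_reg_r (INR m)); [lra|]. unfold Rdiv. rewrite Ropp_mult_distr_l, Rmult_assoc, Rinv_l by lra. nra.
  - apply (Rmult_le_reg_r (INR m)); [lra|]. unfold Rdiv. rewrite Rmult_assoc, Rinv_l by lra. nra.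
Qed.

Fixpoint all_lists (k m : nat) : list (list nat) :=
  match k with
  | O => [[]]
  | S k' => flat_map (fun d => map (cons d) (all_lists k' m)) (seq 0 m)
  end.

Lemma length_all_lists k m : length (all_lists k m) = (m ^ k)%nat.
Proof.
  induction k; simpl; auto. rewrite (flat_map_constant_length (c := (m ^ k)%nat)).
  - rewrite length_seq. auto.
  - intros; rewrite length_map; auto.
Qed.

Lemma in_all_lists k m l : length l = k -> (forall d, In d l -> (d < m)%nat) -> In l (all_lists k m).
Proof.
  revert l; induction k; intros l Hl Hd.
  - destruct l; [left; auto|simpl in Hl; lia].
  - destruct l as [|d l]; [simpl in Hl; lia|]. simpl. apply in_flat_map. exists d. split.
    + apply in_seq. specialize (Hd d (or_introl eq_refl)). lia.
    + apply in_map. apply IHk; [simpl in Hl; lia|]. intros; apply Hd; right; auto.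
Qed.

Definition skip (j r : nat) : nat := if (r <? j)%nat then r else S r.

Definition cellv (m n : nat) (s : nat -> R) : list nat :=
  amax s n :: map (fun r => digit m (s (skip (amax s n) r))) (seq 0 (n - 1)).

Definition dom (m n : nat) : list (list nat) :=
  flat_map (fun j => map (cons j) (all_lists (n - 1) m)) (seq 0 n).

Lemma length_dom m n : length (dom m n) = (n * m ^ (n - 1))%nat.
Proof.
  unfold dom. rewrite (flat_map_constant_length (c := (m ^ (n - 1))%nat)).
  - rewrite length_seq; auto.
  - intros; rewrite length_map, length_all_lists; auto.
Qed.

Lemma digit_lt m v : (1 <= m)%nat -> (digit m v < m)%nat.
Proof. intros; unfold digit; lia. Qed.

Lemma cell_in_dom m n s : (1 <= m)%nat -> (1 <= n)%nat -> In (cellv m n s) (dom m n).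
Proof.
  intros Hm Hn. unfold cellv, dom. apply in_flat_map. exists (amax s n). split.
  - apply in_seq. assert (amax s n < n)%nat by (apply amax_spec; lia). lia.
  - apply in_map. apply in_all_lists.
    + rewrite length_map, length_seq; auto.
    + intros d Hd. apply in_map_iff in Hd. destruct Hd as [r [<- _]]. apply digit_lt; auto.
Qed.

Lemma nth_map_lt {A B} (f : A -> B) l r d d0 : (r < length l)%nat -> nth r (map f l) d = f (nth r l d0).
Proof. revert r; induction l; intros r Hr; simpl in *; [lia|]. destruct r; auto. apply IHl; lia. Qed.

Lemma cell_eq m n s t : (1 <= n)%nat -> cellv m n s = cellv m n t ->
  amax s n = amax t n /\ forall i, (i < n)%nat -> i <> amax s n -> digit m (s i) = digit m (t i).
Proof.
  intros Hn E. unfold cellv in E. injection E as E1 E2. split; auto.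
  intros i Hi Hne. set (j := amax s n) in *.
  set (r := if (i <? j)%nat then i else (i - 1)%nat).
  assert (Hr : (r < n - 1)%nat).
  { assert (Hj : (j < n)%nat) by (apply amax_spec; lia).
    unfold r. destruct (i <? j)%nat eqn:E; [apply Nat.ltb_lt in E|apply Nat.ltb_ge in E]; lia. }
  assert (Hs : skip j r = i).
  { unfold skip, r. destruct (i <? j)%nat eqn:E; [apply Nat.ltb_lt in E|apply Nat.ltb_ge in E].
    - rewrite (proj2 (Nat.ltb_lt i j)) by auto. auto.
    - rewrite (proj2 (Nat.ltb_ge (i - 1) j)) by lia. lia. }
  assert (F := f_equal (fun l => nth r l 0%nat) E2). simpl in F.
  rewrite <- E1 in F.
  rewrite !nth_map_lt with (d0 := 0%nat) in F by (rewrite length_seq; auto).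
  rewrite seq_nth in F by auto. simpl in F. rewrite Hs in F. auto.
Qed.

Lemma pigeon (l : list nat) (h : nat -> list nat) (D : list (list nat)) :
  NoDup l -> (forall a, In a l -> In (h a) D) -> (length D < length l)%nat ->
  exists a b, In a l /\ In b l /\ a <> b /\ h a = h b.
Proof.
  intros Hnd Hin Hlen. apply NNPP. intros Hno.
  assert (NoDup (map h l)).
  { apply NoDup_map_NoDup_ForallPairs; auto. intros a b Ha Hb Eh.
    apply NNPP. intros Hab. apply Hno. exists a, b. auto. }
  assert (incl (map h l) D).
  { intros y Hy. apply in_map_iff in Hy. destruct Hy as [a [<- Ha]]. auto. }
  pose proof (NoDup_incl_length H H0). rewrite length_map in H1. lia.
Qed.

Lemma exp_le a b : a <= b -> exp a <= exp b.
Proof. intros H. destruct (Rle_lt_or_eq_dec a b H); [apply Rlt_le, exp_increasing; auto|subst; lra]. Qed.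

Lemma telescope K a : 1 < K -> 0 < a ->
  Rpower K (- a) / K <= / a * (Rpower (K - 1) (- a) - Rpower K (- a)).
Proof.
  intros HK Ha. unfold Rpower.
  assert (Hl : ln (K - 1) - ln K <= - / K).
  { assert (E : ln (K - 1) - ln K = ln ((K - 1) / K)).
    { unfold Rdiv. rewrite ln_mult, ln_Rinv; try lra. apply Rinv_0_lt_compat; lra. }
    rewrite E. assert (ln ((K - 1) / K) <= (K - 1) / K - 1).
    { pose proof (exp_ineq1_le (ln ((K - 1) / K))). rewrite exp_ln in H. lra. apply Rdiv_lt_0_compat; lra. }
    replace ((K - 1) / K - 1) with (- / K) in H by (field; lra). auto. }
  assert (E1 : exp (- a * ln K) * (1 + a / K) <= exp (- a * ln (K - 1))).
  { replace (- a * ln (K - 1)) with (- a * ln K + (- a * (ln (K - 1) - ln K))) by ring.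
    rewrite exp_plus. apply Rmult_le_compat_l; [apply Rlt_le, exp_pos|].
    eapply Rle_trans; [apply exp_ineq1_le|]. apply exp_le.
    assert (0 <= a / K) by (apply Rlt_le, Rdiv_lt_0_compat; lra).
    unfold Rdiv. nra. }
  assert (Hp : 0 < exp (- a * ln K)) by apply exp_pos.
  apply (Rmult_le_reg_l a); [auto|].
  replace (a * (/ a * (exp (- a * ln (K - 1)) - exp (- a * ln K)))) with (exp (- a * ln (K - 1)) - exp (- a * ln K)) by (field; lra).
  replace (a * (exp (- a * ln K) / K)) with (exp (- a * ln K) * (a / K)) by (field; lra).
  lra.
Qed.

Definition alpha (n : nat) : R := 2 / (INR n - 1).
Definition Cst (n : nat) : R := 16 * INR n * (INR n - 1) * Rpower (2 * INR n) (alpha n) / alpha n.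

Lemma rate n K m : (2 <= n)%nat -> (1 <= m)%nat -> (2 * n < K)%nat ->
  (K < 2 * n * (m + 1) ^ (n - 1))%nat ->
  4 / INR K * (INR n * (INR n - 1) * (1 / INR m) ^ 2) <=
  Cst n * (Rpower (INR (K - 1)) (- alpha n) - Rpower (INR K) (- alpha n)).
Proof.
  intros Hn Hm HK Hb.
  assert (Hn2 : 2 <= INR n) by (apply (le_INR 2); auto).
  assert (Hm1 : 1 <= INR m) by (apply (le_INR 1); auto).
  assert (HK1 : 4 < INR K) by (replace 4 with (INR 4) by (simpl; lra); apply lt_INR; lia).
  set (a := alpha n).
  assert (Ha : 0 < a) by (unfold a, alpha; apply Rdiv_lt_0_compat; lra).
  set (x := INR (m + 1)).
  assert (Hx : x = INR m + 1) by (unfold x; rewrite plus_INR; simpl; auto).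
  assert (P1 : Rpower (INR K / (2 * INR n)) a <= x ^ 2).
  { assert (E : Rpower (x ^ (n - 1)) a = x ^ 2).
    { rewrite <- Rpower_pow by lra. rewrite Rpower_mult. rewrite <- Rpower_pow by lra. f_equal.
      unfold a, alpha. rewrite minus_INR by lia. simpl. field. lra. }
    rewrite <- E. apply Rle_Rpower_l; [lra|]. split.
    - apply Rdiv_lt_0_compat; lra.
    - assert (INR K < INR (2 * n * (m + 1) ^ (n - 1))) by (apply lt_INR; auto).
      rewrite !mult_INR, pow_INR in H. fold x in H. simpl in H.
      apply Rlt_le. apply (Rmult_lt_reg_r (2 * INR n)); [lra|]. unfold Rdiv. rewrite Rmult_assoc, Rinv_l by lra. lra. }
  assert (P2 : Rpower (INR K / (2 * INR n)) a * Rpower (2 * INR n) a = Rpower (INR K) a).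
  { rewrite Rpower_mult_distr by (try apply Rdiv_lt_0_compat; lra). f_equal. field. lra. }
  assert (Q0 : 0 < Rpower (INR K / (2 * INR n)) a) by (unfold Rpower; apply exp_pos).
  assert (QK : 0 < Rpower (INR K) a) by (unfold Rpower; apply exp_pos).
  assert (Q2 : 0 < Rpower (2 * INR n) a) by (unfold Rpower; apply exp_pos).
  (* 1/m^2 <= 4 / x^2 <= 4 * Rpower(2n) a * Rpower K (-a) *)
  assert (B1 : (1 / INR m) ^ 2 <= 4 * (Rpower (2 * INR n) a * Rpower (INR K) (- a))).
  { rewrite Rpower_Ropp. rewrite <- P2.
    assert (E : (1 / INR m) ^ 2 = / (INR m ^ 2)) by (field; lra). rewrite E.
    assert (x ^ 2 <= 4 * INR m ^ 2) by (rewrite Hx; nra).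
    replace (4 * (Rpower (2 * INR n) a * / (Rpower (INR K / (2 * INR n)) a * Rpower (2 * INR n) a)))
      with (4 / Rpower (INR K / (2 * INR n)) a) by (field; lra).
    apply (Rmult_le_reg_r (INR m ^ 2)); [nra|]. rewrite Rinv_l by nra.
    apply (Rmult_le_reg_r (Rpower (INR K / (2 * INR n)) a)); [lra|].
    replace (4 / Rpower (INR K / (2 * INR n)) a * INR m ^ 2 * Rpower (INR K / (2 * INR n)) a) with (4 * INR m ^ 2) by (field; lra).
    nra. }
  assert (T : Rpower (INR K) (- a) / INR K <= / a * (Rpower (INR (K - 1)) (- a) - Rpower (INR K) (- a))).
  { rewrite minus_INR by lia. simpl. apply telescope; lra. }
  unfold Cst. fold a.
  assert (0 <= INR n * (INR n - 1)) by nra.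
  assert (0 <= Rpower (INR K) (- a)) by (unfold Rpower; apply Rlt_le, exp_pos).
  apply Rle_trans with (4 / INR K * (INR n * (INR n - 1) * (4 * (Rpower (2 * INR n) a * Rpower (INR K) (- a))))).
  { apply Rmult_le_compat_l; [apply Rlt_le, Rdiv_lt_0_compat; lra|]. apply Rmult_le_compat_l; auto. }
  replace (4 / INR K * (INR n * (INR n - 1) * (4 * (Rpower (2 * INR n) a * Rpower (INR K) (- a)))))
    with ((16 * INR n * (INR n - 1) * Rpower (2 * INR n) a) * (Rpower (INR K) (- a) / INR K)) by (field; lra).
  replace (16 * INR n * (INR n - 1) * Rpower (2 * INR n) a / a * (Rpower (INR (K - 1)) (- a) - Rpower (INR K) (- a)))
    with ((16 * INR n * (INR n - 1) * Rpower (2 * INR n) a) * (/ a * (Rpower (INR (K - 1)) (- a) - Rpower (INR K) (- a)))) by (field; lra).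
  apply Rmult_le_compat_l; auto. nra.
Qed.

Lemma gamma_half_SS k : (1 <= k)%nat -> gamma_half (S (S k)) = INR k / 2 * gamma_half k.
Proof. intros Hk. destruct k; [lia|]. reflexivity. Qed.

Lemma gh_bound k : (1 <= k)%nat -> 0 < gamma_half (k + 2) <= sqrt (PI * INR k) ^ k.
Proof.
  assert (HPI : 3 < PI) by (pose proof PI2_3_2; lra).
  induction k as [k IH] using lt_wf_ind. intros Hk.
  destruct k as [|[|[|k]]]; [lia| | |].
  - simpl. rewrite Rmult_1_r. replace (1 + 1) with 2 by ring. replace (PI * 1) with PI by ring.
    assert (0 < sqrt PI) by (apply sqrt_lt_R0; lra). lra.
  - simpl. replace ((1 + 1) / 2 * 1) with 1 by field.
    rewrite Rmult_1_r. rewrite sqrt_sqrt by (apply Rmult_le_pos; lra). split; lra.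
  - replace (S (S (S k)) + 2)%nat with (S (S (S (S (S k)))))%nat by lia.
    rewrite gamma_half_SS by lia.
    destruct (IH (S k) ltac:(lia) ltac:(lia)) as [G1 G2].
    replace (S k + 2)%nat with (S (S (S k))) in G1, G2 by lia.
    assert (HK : 1 <= INR (S k)) by (apply (le_INR 1); lia).
    assert (EK : INR (S (S (S k))) = INR (S k) + 2) by (simpl; lra).
    split.
    + apply Rmult_lt_0_compat; auto. rewrite EK. lra.
    + set (y := sqrt (PI * INR (S (S (S k))))).
      assert (Hy : y * y = PI * INR (S (S (S k)))) by (apply sqrt_sqrt; rewrite EK; nra).
      assert (Hy0 : 0 <= y) by apply sqrt_pos.
      assert (M : sqrt (PI * INR (S k)) ^ S k <= y ^ S k).
      { apply pow_incr. split; [apply sqrt_pos|]. apply sqrt_le_1_alt. rewrite EK. nra. }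
      replace (y ^ S (S (S k))) with ((y * y) * y ^ S k) by (simpl; ring). rewrite Hy.
      assert (0 <= INR (S (S (S k)))) by (rewrite EK; lra).
      apply Rle_trans with (INR (S (S (S k))) / 2 * y ^ S k).
      * apply Rmult_le_compat_l; [lra|]. lra.
      * apply Rmult_le_compat_r; [apply pow_le; auto|]. nra.
Qed.

Lemma Cst_le_nu n : (2 <= n)%nat -> Cst n <= nu n.
Proof.
  intros Hn.
  assert (HPI : 3 < PI) by (pose proof PI2_3_2; lra).
  assert (Hn2 : 2 <= INR n) by (apply (le_INR 2); auto).
  set (a := alpha n).
  assert (Ha : 0 < a) by (unfold a, alpha; apply Rdiv_lt_0_compat; lra).
  destruct (gh_bound (n - 1) ltac:(lia)) as [G1 G2].
  replace (n - 1 + 2)%nat with (n + 1)%nat in G1, G2 by lia.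
  set (G := gamma_half (n + 1)) in *.
  assert (EI : INR (n - 1) = INR n - 1) by (rewrite minus_INR by lia; simpl; auto).
  rewrite EI in G2.
  assert (RG : Rpower G a <= PI * (INR n - 1)).
  { set (y := sqrt (PI * (INR n - 1))).
    assert (Hy : 0 < y) by (apply sqrt_lt_R0; nra).
    apply Rle_trans with (Rpower (y ^ (n - 1)) a).
    - apply Rle_Rpower_l; [lra|split]. lra. exact G2.
    - rewrite <- Rpower_pow by auto. rewrite Rpower_mult. rewrite EI.
      replace ((INR n - 1) * a) with (INR 2) by (unfold a, alpha; simpl; field; lra).
      rewrite Rpower_pow by auto. unfold y. simpl. rewrite Rmult_1_r. rewrite sqrt_sqrt by nra. lra. }
  assert (QG : 0 < Rpower G a) by (unfold Rpower; apply exp_pos).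
  assert (Q2 : 0 < Rpower (2 * INR n) a) by (unfold Rpower; apply exp_pos).
  assert (EG : Rpower (2 * INR n / G) a = Rpower (2 * INR n) a / Rpower G a).
  { unfold Rdiv. rewrite <- Rpower_mult_distr by (try apply Rinv_0_lt_compat; lra).
    f_equal. unfold Rpower. rewrite ln_Rinv by auto. rewrite <- exp_Ropp. f_equal. ring. }
  set (t := 1 / (2 * (INR n - 1))).
  assert (Ht : 0 < t) by (unfold t; apply Rdiv_lt_0_compat; lra).
  set (d := sqrt (1 + t) - 1).
  assert (Hd0 : 0 < d).
  { unfold d. rewrite <- sqrt_1 at 2. assert (sqrt 1 < sqrt (1 + t)) by (apply sqrt_lt_1_alt; lra). lra. }
  assert (Hd1 : d <= t / 2).
  { unfold d. assert (sqrt (1 + t) <= 1 + t / 2).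
    { rewrite <- (sqrt_pow2 (1 + t / 2)) by lra. apply sqrt_le_1_alt. nra. }
    lra. }
  unfold nu. fold t. fold d. change (2 / (INR n - 1)) with (alpha n). fold a. fold G.
  rewrite EG. unfold Cst. fold a.
  set (R2 := Rpower (2 * INR n) a) in *.
  set (RGv := Rpower G a) in *.
  assert (E1 : 16 * INR n * (INR n - 1) * R2 / a = 8 * INR n * (INR n - 1) ^ 2 * R2) by (unfold a, alpha; field; lra).
  rewrite E1.
  assert (Hd2 : 2 * d ^ 2 <= 1 / (8 * (INR n - 1) ^ 2)).
  { assert (d ^ 2 <= (t / 2) ^ 2) by (apply pow_incr; lra).
    replace (1 / (8 * (INR n - 1) ^ 2)) with (2 * (t / 2) ^ 2) by (unfold t; field; lra). lra. }
  assert (Hdd : 0 < 2 * d ^ 2) by nra.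
  assert (Hnn : 0 < INR n * (INR n - 1)) by nra.
  apply Rle_trans with (PI * INR n * (INR n - 1) * (8 * (INR n - 1) ^ 2) * (R2 / (PI * (INR n - 1)))).
  - right. field. split; lra.
  - apply Rmult_le_compat.
    + apply Rmult_le_pos; [|nra]. apply Rmult_le_pos; [|lra]. apply Rmult_le_pos; lra.
    + apply Rlt_le, Rdiv_lt_0_compat; nra.
    + unfold Rdiv. apply Rmult_le_compat_l; [nra|].
      replace (8 * (INR n - 1) ^ 2) with (/ (1 / (8 * (INR n - 1) ^ 2))) by (field; lra).
      apply Rinv_le_contravar; auto.
    + unfold Rdiv. apply Rmult_le_compat_l; [lra|]. apply Rinv_le_contravar; auto.
Qed.

Lemma sumR_fsum_swap {A} (l : list A) n (g : A -> nat -> R) :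
  sumR (map (fun c => fsum n (g c)) l) = fsum n (fun x => sumR (map (fun c => g c x) l)).
Proof.
  induction l; cbn [map].
  - change (0 = fsum n (fun _ => 0)). rewrite fsum_const; lra.
  - rewrite sumR_cons, IHl, <- fsum_add. apply fsum_ext; intros. rewrite sumR_cons; auto.
Qed.

Lemma sum_out_prob nx pi Q : is_input_dist nx pi -> is_channel nx Q ->
  sumR (map (out_prob nx pi) Q) = 1.
Proof.
  intros [_ Hs] [_ Hc]. unfold out_prob.
  change (sumR (map (fun c => fsum nx (fun x => pi x * c x)) Q) = 1).
  rewrite sumR_fsum_swap. rewrite <- Hs. apply fsum_ext. intros x Hx.
  rewrite sumR_map_scal. specialize (Hc x Hx). change (sumR (map (fun c : column => c x) Q) = 1) in Hc.
  transitivity (pi x * 1); [f_equal; exact Hc| ring].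
Qed.

Lemma count_filter {A} (p : A -> bool) (c : R) l :
  sumR (map (fun k => if p k then 0 else c) l) + INR (length (filter p l)) * c = INR (length l) * c.
Proof.
  induction l; [unfold sumR; simpl; lra|]. cbn [map filter]. rewrite sumR_cons.
  destruct (p a); cbn [length]; rewrite ?S_INR; lra.
Qed.

Definition smallb nx pi (Q : channel) (K : nat) (k : nat) : bool :=
  if Rle_dec (out_prob nx pi (nth k Q zcol)) (2 / INR K) then true else false.

Lemma many_small nx pi Q : is_input_dist nx pi -> valid nx pi Q -> (1 <= length Q)%nat ->
  (length Q < 2 * length (filter (smallb nx pi Q (length Q)) (seq 0 (length Q))))%nat.
Proof.
  intros Hpi [Hc Hp] HK. set (K := length Q).
  pose proof (sum_out_prob nx pi Q Hpi Hc) as Hs.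
  rewrite (sumR_as_fsum _ _ zcol) in Hs. fold K in Hs.
  assert (HK1 : 1 <= INR K) by (apply (le_INR 1); auto).
  assert (Lt : fsum K (fun k => if smallb nx pi Q K k then 0 else 2 / INR K) < fsum K (fun k => out_prob nx pi (nth k Q zcol))).
  { apply fsum_lt; [lia|]. intros k Hk. unfold smallb.
    destruct (Rle_dec (out_prob nx pi (nth k Q zcol)) (2 / INR K)); [|lra].
    apply Hp. apply nth_In; auto. }
  rewrite Hs in Lt. pose proof (count_filter (smallb nx pi Q K) (2 / INR K) (seq 0 K)) as C.
  rewrite <- fsum_eq, length_seq in C.
  set (s := length (filter (smallb nx pi Q K) (seq 0 K))) in *.
  assert (INR K < 2 * INR s).
  { assert (INR K * (2 / INR K) = 2) by (field; lra).
    assert (INR s * (2 / INR K) > 1) by lra.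
    replace (2 * INR s) with (INR s * (2 / INR K) * INR K) by (field; lra). nra. }
  apply INR_lt. rewrite mult_INR. simpl. lra.
Qed.

Lemma find_m (P : nat -> Prop) a b : (forall m, P m \/ ~ P m) -> P a -> ~ P b -> (a < b)%nat ->
  exists m, (a <= m < b)%nat /\ P m /\ ~ P (S m).
Proof.
  intros Hd Ha Hb Hab. remember (b - a)%nat as d. revert a Ha Hab Heqd.
  induction d; intros a Ha Hab Heqd; [lia|].
  destruct (Hd (S a)) as [H|H].
  - destruct (Nat.eq_dec (S a) b); [subst; contradiction|].
    destruct (IHd (S a)) as [m [H1 [H2 H3]]]; auto; try lia. exists m; split; [lia|auto].
  - exists a. split; [lia|auto].
Qed.

Lemma sv_facts nx pi c : is_input_dist nx pi -> (forall x, (x < nx)%nat -> 0 <= c x) -> 0 < out_prob nx pi c ->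
  (forall x, (x < nx)%nat -> 0 <= sv nx pi c x <= 1) /\ fsum nx (fun x => sv nx pi c x ^ 2) = 1.
Proof.
  intros [Hpi _] Hc HP.
  assert (E : forall x, (x < nx)%nat -> sv nx pi c x ^ 2 = pi x * c x / out_prob nx pi c).
  { intros x Hx. unfold sv. simpl. rewrite Rmult_1_r. apply sqrt_sqrt.
    apply Rmult_le_pos; [apply Rmult_le_pos; [apply Rlt_le, Hpi; auto|apply Hc; auto]|apply Rlt_le, Rinv_0_lt_compat; auto]. }
  assert (S1 : fsum nx (fun x => sv nx pi c x ^ 2) = 1).
  { rewrite (fsum_ext _ _ (fun x => / out_prob nx pi c * (pi x * c x))).
    - rewrite fsum_scal. fold (out_prob nx pi c). field. lra.
    - intros x Hx. rewrite E by auto. field. lra. }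
  split; auto. intros x Hx. split; [apply sqrt_pos|].
  rewrite (fsum_split _ _ x Hx) in S1.
  assert (0 <= fsum nx (fun y => if (y =? x)%nat then 0 else sv nx pi c y ^ 2)).
  { apply fsum_nonneg. intros y _. destruct (y =? x)%nat; [lra|apply pow2_ge_0]. }
  assert (0 <= sv nx pi c x) by apply sqrt_pos. nra.
Qed.

Lemma pair_bound nx pi (ca cb : column) m : (2 <= nx)%nat -> (1 <= m)%nat -> is_input_dist nx pi ->
  (forall x, (x < nx)%nat -> 0 <= ca x) -> 0 < out_prob nx pi ca ->
  (forall x, (x < nx)%nat -> 0 <= cb x) -> 0 < out_prob nx pi cb ->
  cellv m nx (sv nx pi ca) = cellv m nx (sv nx pi cb) ->
  fsum nx (fun x => (sv nx pi ca x - sv nx pi cb x) ^ 2) <= INR nx * (INR nx - 1) * (1 / INR m) ^ 2.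
Proof.
  intros Hn Hm Hpi Ha HA Hb HB Ec.
  destruct (sv_facts nx pi ca Hpi Ha HA) as [Fa Sa].
  destruct (sv_facts nx pi cb Hpi Hb HB) as [Fb Sb].
  destruct (cell_eq m nx _ _ ltac:(lia) Ec) as [Ej Ed].
  destruct (amax_spec (sv nx pi ca) nx ltac:(lia)) as [Hj Ma].
  destruct (amax_spec (sv nx pi cb) nx ltac:(lia)) as [_ Mb].
  rewrite <- Ej in Mb.
  assert (Hm1 : 1 <= INR m) by (apply (le_INR 1); auto).
  apply sphere_diam with (j := amax (sv nx pi ca) nx); auto.
  - apply Rlt_le, Rdiv_lt_0_compat; lra.
  - intros x Hx; apply Fa; auto.
  - intros x Hx; apply Fb; auto.
  - intros i Hi Hne. apply digit_close; auto.
Qed.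

Lemma step_bound nx pi Q : (2 <= nx)%nat -> is_input_dist nx pi -> valid nx pi Q -> (2 * nx < length Q)%nat ->
  exists i j, (i < j < length Q)%nat /\
    MI nx pi Q - MI nx pi (merge Q i j) <=
    Cst nx * (Rpower (INR (length Q - 1)) (- alpha nx) - Rpower (INR (length Q)) (- alpha nx)).
Proof.
  intros Hn Hpi Hv HK. set (K := length Q) in *.
  pose proof (many_small nx pi Q Hpi Hv ltac:(lia)) as Hsm. fold K in Hsm.
  set (Sl := filter (smallb nx pi Q K) (seq 0 K)) in *.
  destruct (find_m (fun m => (2 * nx * m ^ (nx - 1) <= K)%nat) 1 K) as [m [Hm1 [Hm2 Hm3]]].
  - intros m. destruct (le_dec (2 * nx * m ^ (nx - 1)) K); auto.
  - rewrite Nat.pow_1_l. lia.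
  - intros H. assert (K <= K ^ (nx - 1))%nat.
    { replace (nx - 1)%nat with (S (nx - 2)) by lia. rewrite Nat.pow_succ_r'.
      assert (1 <= K ^ (nx - 2))%nat by (apply Nat.neq_0_lt_0, Nat.pow_nonzero; lia). nia. }
    nia.
  - lia.
  - destruct (pigeon Sl (fun k => cellv m nx (sv nx pi (nth k Q zcol))) (dom m nx)) as [a [b [Ha [Hb [Hab Ec]]]]].
    + apply NoDup_filter, seq_NoDup.
    + intros k _. apply cell_in_dom; lia.
    + rewrite length_dom. lia.
    + unfold Sl in Ha, Hb. apply filter_In in Ha, Hb. destruct Ha as [Ha Pa]. destruct Hb as [Hb Pb].
      apply in_seq in Ha. apply in_seq in Hb.
      unfold smallb in Pa, Pb.
      destruct (Rle_dec (out_prob nx pi (nth a Q zcol)) (2 / INR K)) as [Pa'|]; [|discriminate].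
      destruct (Rle_dec (out_prob nx pi (nth b Q zcol)) (2 / INR K)) as [Pb'|]; [|discriminate].
      destruct Hv as [[Hnn Hcs] Hpos].
      assert (Ia : In (nth a Q zcol) Q) by (apply nth_In; lia).
      assert (Ib : In (nth b Q zcol) Q) by (apply nth_In; lia).
      assert (HK4 : 4 < INR K) by (replace 4 with (INR 4) by (simpl; lra); apply lt_INR; lia).
      assert (Hb3 : (K < 2 * nx * (m + 1) ^ (nx - 1))%nat) by (replace (m + 1)%nat with (S m) by lia; lia).
      assert (Hrate := rate nx K m Hn ltac:(lia) HK Hb3).
      assert (Hnx : 2 <= INR nx) by (apply (le_INR 2); auto).
      assert (Key : forall i j, (i < j < K)%nat -> (i = a /\ j = b \/ i = b /\ j = a) ->
        MI nx pi Q - MI nx pi (merge Q i j) <= Cst nx * (Rpower (INR (K - 1)) (- alpha nx) - Rpower (INR K) (- alpha nx))).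
      { intros i j Hij Hor.
        assert (Pi : out_prob nx pi (nth i Q zcol) <= 2 / INR K) by (destruct Hor as [[-> ->]|[-> ->]]; auto).
        assert (Pj : out_prob nx pi (nth j Q zcol) <= 2 / INR K) by (destruct Hor as [[-> ->]|[-> ->]]; auto).
        assert (Eij : cellv m nx (sv nx pi (nth i Q zcol)) = cellv m nx (sv nx pi (nth j Q zcol)))
          by (destruct Hor as [[-> ->]|[-> ->]]; auto).
        assert (Ii : In (nth i Q zcol) Q) by (apply nth_In; lia).
        assert (Ij : In (nth j Q zcol) Q) by (apply nth_In; lia).
        rewrite cost_merge by lia.
        pose proof (Hpos _ Ii). pose proof (Hpos _ Ij).
        pose proof (cost_bound nx pi (nth i Q zcol) (nth j Q zcol) (proj1 Hpi) (Hnn _ Ii) (Hnn _ Ij) H H0) as CB.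
        pose proof (pair_bound nx pi (nth i Q zcol) (nth j Q zcol) m Hn ltac:(lia) Hpi (Hnn _ Ii) H (Hnn _ Ij) H0 Eij) as PB.
        unfold mcol.
        eapply Rle_trans; [apply CB|]. eapply Rle_trans; [|apply Hrate].
        assert (0 <= fsum nx (fun x => (sv nx pi (nth i Q zcol) x - sv nx pi (nth j Q zcol) x) ^ 2))
          by (apply fsum_nonneg; intros; apply pow2_ge_0).
        replace (4 / INR K) with (2 / INR K + 2 / INR K) by (field; lra).
        apply Rmult_le_compat; lra. }
      destruct (Nat.lt_total a b) as [Hlt|[Heq|Hlt]].
      * exists a, b. split; [lia|]. apply Key; auto; lia.
      * contradiction.
      * exists b, a. split; [lia|]. apply Key; auto; lia.
Qed.

Lemma loss nx pi L : (2 <= nx)%nat -> is_input_dist nx pi -> (2 * nx <= L)%nat ->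
  forall Q R, greedy_merge nx pi L Q R -> valid nx pi Q -> (L <= length Q)%nat ->
  MI nx pi Q - MI nx pi R <= Cst nx * (Rpower (INR L) (- alpha nx) - Rpower (INR (length Q)) (- alpha nx)).
Proof.
  intros Hn Hpi HL Q R H. induction H as [Q HQ|Q Q' R HQ Hs Hg IH]; intros Hv HLQ.
  - replace (length Q) with L by lia. lra.
  - destruct Hs as [i [j [Hij [Hj [EQ Hmin]]]]].
    destruct (step_bound nx pi Q Hn Hpi Hv ltac:(lia)) as [i' [j' [Hij' Hb]]].
    pose proof (Hmin i' j' ltac:(lia) ltac:(lia)) as Hm.
    subst Q'.
    assert (Hv' : valid nx pi (merge Q i j)) by (apply valid_merge; auto).
    rewrite length_merge in IH by lia.
    specialize (IH Hv' ltac:(lia)). lra.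
Qed.

Lemma Cst_nonneg n : (2 <= n)%nat -> 0 <= Cst n.
Proof.
  intros Hn. assert (Hn2 : 2 <= INR n) by (apply (le_INR 2); auto).
  unfold Cst. assert (0 < alpha n) by (unfold alpha; apply Rdiv_lt_0_compat; lra).
  assert (0 < Rpower (2 * INR n) (alpha n)) by (unfold Rpower; apply exp_pos).
  apply Rlt_le, Rdiv_lt_0_compat; auto. apply Rmult_lt_0_compat; auto. nra.
Qed.

Theorem theorem1 (nx : nat) (pi : nat -> R) (W : channel) (L : nat)
  (hnx : (2 <= nx)%nat)
  (hpi : is_input_dist nx pi)
  (hW : is_channel nx W)
  (hout : forall c, In c W -> 0 < out_prob nx pi c)
  (hY : (2 * nx < length W)%nat)
  (hL : (2 * nx <= L)%nat) :
  (exists Q : channel, degraded nx Q W /\ (length Q <= L)%nat /\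
     MI nx pi W - MI nx pi Q <= nu nx * Rpower (INR L) (- (2 / (INR nx - 1))))
  /\
  (forall Q : channel, greedy_merge nx pi L W Q ->
     MI nx pi W - MI nx pi Q <= nu nx * Rpower (INR L) (- (2 / (INR nx - 1)))).
Proof.
  assert (Hv : valid nx pi W) by (split; auto).
  assert (Hgr : forall Q : channel, greedy_merge nx pi L W Q ->
     MI nx pi W - MI nx pi Q <= nu nx * Rpower (INR L) (- (2 / (INR nx - 1)))).
  { intros Q HQ. change (2 / (INR nx - 1)) with (alpha nx).
    pose proof (Cst_le_nu nx hnx). pose proof (Cst_nonneg nx hnx).
    assert (P1 : 0 <= Rpower (INR L) (- alpha nx)) by (unfold Rpower; apply Rlt_le, exp_pos).
    assert (P2 : 0 <= Rpower (INR (length W)) (- alpha nx)) by (unfold Rpower; apply Rlt_le, exp_pos).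
    destruct (le_lt_dec (length W) L) as [Hle|Hlt].
    - inversion HQ; subst; [|lia]. nra.
    - pose proof (loss nx pi L hnx hpi hL W Q HQ Hv ltac:(lia)). nra. }
  split; auto.
  destruct (greedy_exists nx pi L W ltac:(lia)) as [R HR].
  exists R. split; [|split].
  - destruct (greedy_Inv nx pi L W R HR) as [f Hf]. eapply Inv_degraded; eauto.
  - eapply greedy_length; eauto.
  - apply Hgr; auto.
Qed.
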